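(* Let $(X,\{R_i\}_{i=0}^d)$ be a symmetric association scheme with adjacency matrices $A_0=I,\dots,A_d$ and intersection numbers $p_{ij}^k$, and let $W=\sum_{i=0}^dw_iA_i$ with $w_0=1$ be a complex Hadamard matrix. Let $\Delta\subseteq\{1,\dots,d\}$, and suppose there exists $i\in\{1,\dots,d\}$ such that $p_{i_1,j_1}^i>0$ for all $i_1,j_1\in\Delta$. Then \[ H_4(W)\supseteq\left\{\frac{w_{i_1}w_{i_2}}{w_{j_1}w_{j_2}}\;\middle|\;i_1,i_2,j_1,j_2\in\Delta\right\}\setminus\{1\}. \] In particular, if there exists $i\in\{1,\dots,d\}$ such that $p_{i_1,j_1}^i>0$ for all $i_1,j_1\in\{1,\dots,d\}$, then \[ H_4(W)\setminus\{1\}=\left\{\frac{w_{i_1}w_{i_2}}{w_{j_1}w_{j_2}}\;\middle|\;i_1,i_2,j_1,j_2\in\{1,\dots,d\}\right\}\setminus\{1\}. \]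
   Context: An association scheme $(X,\{R_i\}_{i=0}^d)$ is a partition of $X\times X$ into relations $R_0=\{(x,x)\}$, $R_1,\dots,R_d$ such that for $(x,y)\in R_k$ the number $p_{ij}^k=|\{z\in X:(x,z)\in R_i,(z,y)\in R_j\}|$ depends only on $i,j,k$; symmetric means each $R_i$ is symmetric. $A_i$ is the $(0,1)$-matrix of $R_i$. A complex Hadamard matrix is a square complex matrix $H$ of order $n=|X|$ with entries of absolute value $1$ and $HH^*=nI$. For $W$ indexed by $X$, \[ H_4(W)=\left\{\frac{W_{x_1,y_1}W_{x_2,y_2}}{W_{x_2,y_1}W_{x_1,y_2}}\;\middle|\;x_1,x_2,y_1,y_2\in X,\ |\{x_1,x_2,y_1,y_2\}|=4\right\}. \] *)

(* Defs.v *)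
From HB Require Import structures.
From mathcomp Require Import all_boot all_order all_algebra all_field.
Set Implicit Arguments. Unset Strict Implicit. Unset Printing Implicit Defensive.
Import Order.TTheory GRing.Theory Num.Theory.
Local Open Scope ring_scope.

(* An association scheme with classes R_0..R_d on a finite set X is encoded
   by the function R : X -> X -> 'I_d.+1 giving the index of the unique
   relation containing (x,y) (so the R_i partition X x X). *)
Record assoc_scheme (X : finType) (d : nat) (R : X -> X -> 'I_d.+1) : Prop := {
  as_diag : forall x y, (R x y == ord0) = (x == y);
  as_nonempty : forall i : 'I_d.+1, exists x y, R x y = i;
  as_regular : forall (i j k : 'I_d.+1) (x y x' y' : X),
      R x y = k -> R x' y' = k ->
      #|[set z | (R x z == i) && (R z y == j)]|
      = #|[set z | (R x' z == i) && (R z y' == j)]| }.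

Definition symmetric_scheme (X : finType) (d : nat) (R : X -> X -> 'I_d.+1) : Prop :=
  forall x y, R x y = R y x.

Definition pnum (X : finType) (d : nat) (R : X -> X -> 'I_d.+1) (i j k : 'I_d.+1) : nat :=
  match [pick xy : X * X | R xy.1 xy.2 == k] with
  | Some xy => #|[set z | (R xy.1 z == i) && (R z xy.2 == j)]|
  | None => 0
  end.

Definition complex_hadamard (X : finType) (C : numClosedFieldType) (W : X -> X -> C) : Prop :=
  (forall x y, `|W x y| = 1) /\
  (forall x y, \sum_(z : X) W x z * (W y z)^* = (x == y)%:R * #|X|%:R).

Definition H4 (X : finType) (C : numClosedFieldType) (W : X -> X -> C) (c : C) : Prop :=
  exists x1 x2 y1 y2 : X,
    [/\ uniq [:: x1; x2; y1; y2] &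
        c = W x1 y1 * W x2 y2 / (W x2 y1 * W x1 y2)].

(* Main.v *)
Require Import Defs.
From HB Require Import structures.
From mathcomp Require Import all_boot all_order all_algebra all_field.
Import Order.TTheory GRing.Theory Num.Theory.
Local Open Scope ring_scope.

Lemma pnum_ex (X : finType) (d : nat) (R : X -> X -> 'I_d.+1) (a b k : 'I_d.+1) :
  assoc_scheme R -> (0 < pnum R a b k)%N ->
  forall x y, R x y = k -> exists z, R x z = a /\ R z y = b.
Proof.
move=> hs; rewrite /pnum; case: pickP => [[u v] /= /eqP Huv|] // Hpos x y Hxy.
rewrite (as_regular hs a b Huv Hxy) in Hpos.
case/card_gt0P: Hpos => z; rewrite inE => /andP[/eqP h1 /eqP h2].
by exists z.
Qed.

Lemma part1 (X : finType) (d : nat) (R : X -> X -> 'I_d.+1)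
    (C : numClosedFieldType) (w : 'I_d.+1 -> C) :
  assoc_scheme R -> symmetric_scheme R -> complex_hadamard (fun x y => w (R x y)) ->
  forall Delta : {set 'I_d.+1}, ord0 \notin Delta ->
     (exists i : 'I_d.+1, i != ord0 /\
        forall i1 j1, i1 \in Delta -> j1 \in Delta -> (0 < pnum R i1 j1 i)%N) ->
     forall i1 i2 j1 j2, i1 \in Delta -> i2 \in Delta -> j1 \in Delta -> j2 \in Delta ->
       w i1 * w i2 / (w j1 * w j2) != 1 ->
       H4 (fun x y => w (R x y)) (w i1 * w i2 / (w j1 * w j2)).
Proof.
move=> hs hsym [hn _] D D0 [i [hi hp]] i1 i2 j1 j2 Hi1 Hi2 Hj1 Hj2 Hne.
have nz : forall k, k \in D -> k != ord0.
  by move=> k kD; apply/eqP => e; move: D0; rewrite -e kD.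
have [x [y Hxy]] := as_nonempty hs i.
have [y1 [H1 H2]] := @pnum_ex _ _ _ _ _ _ hs (hp i1 j1 Hi1 Hj1) _ _ Hxy.
have [y2 [H3 H4']] := @pnum_ex _ _ _ _ _ _ hs (hp j2 i2 Hj2 Hi2) _ _ Hxy.
exists x, y, y1, y2; split; last first.
  by rewrite H1 (hsym y y2) H4' (hsym y y1) H2 H3.
have ne : forall a b k, R a b = k -> k != ord0 -> a != b.
  by move=> a b k e kn; rewrite -(as_diag hs) e.
have n1 : x != y by apply: (ne _ _ _ Hxy).
have n2 : x != y1 by apply: (ne _ _ _ H1); apply: nz.
have n3 : x != y2 by apply: (ne _ _ _ H3); apply: nz.
have n4 : y != y1 by rewrite hsym in H2; apply: (ne _ _ _ H2); apply: nz.
have n5 : y != y2 by rewrite hsym in H4'; apply: (ne _ _ _ H4'); apply: nz.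
have n6 : y1 != y2.
  apply/eqP => e; subst y2; move: Hne.
  have e1 : j2 = i1 by rewrite -H3 H1.
  have e2 : i2 = j1 by rewrite -H4' H2.
  rewrite e1 e2.
  have w1 : w i1 != 0 by rewrite -H1 -normr_eq0 hn oner_neq0.
  have w2 : w j1 != 0 by rewrite -H2 -normr_eq0 hn oner_neq0.
  by rewrite [w j1 * w i1]mulrC divff ?mulf_neq0 ?eqxx.
by rewrite /= !inE !negb_or n1 n2 n3 n4 n5 n6.
Qed.

Theorem lemma5p2 (X : finType) (d : nat) (R : X -> X -> 'I_d.+1)
    (C : numClosedFieldType) (w : 'I_d.+1 -> C) :
  assoc_scheme R -> symmetric_scheme R ->
  w ord0 = 1 -> complex_hadamard (fun x y => w (R x y)) ->
  (forall Delta : {set 'I_d.+1}, ord0 \notin Delta ->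
     (exists i : 'I_d.+1, i != ord0 /\
        forall i1 j1, i1 \in Delta -> j1 \in Delta -> (0 < pnum R i1 j1 i)%N) ->
     forall i1 i2 j1 j2, i1 \in Delta -> i2 \in Delta -> j1 \in Delta -> j2 \in Delta ->
       w i1 * w i2 / (w j1 * w j2) != 1 ->
       H4 (fun x y => w (R x y)) (w i1 * w i2 / (w j1 * w j2)))
  /\
  ((exists i : 'I_d.+1, i != ord0 /\
      forall i1 j1 : 'I_d.+1, i1 != ord0 -> j1 != ord0 -> (0 < pnum R i1 j1 i)%N) ->
   forall c : C,
     (H4 (fun x y => w (R x y)) c /\ c != 1) <->
     ((exists i1 i2 j1 j2 : 'I_d.+1,
         [/\ i1 != ord0, i2 != ord0, j1 != ord0, j2 != ord0 &
             c = w i1 * w i2 / (w j1 * w j2)]) /\ c != 1)).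
Proof.
move=> hs hsym w0 hW.
have P1 := @part1 _ _ _ _ _ hs hsym hW.
split=> // [[i [hi hp]]] c; split.
  move=> [[x1 [x2 [y1 [y2 [Hu Hc]]]]] c1]; split=> //.
  move: Hu => /=; rewrite !inE !negb_or.
  case/and4P => /and3P[h12 h13 h14] /andP[h23 h24] h34 _.
  by exists (R x1 y1), (R x2 y2), (R x2 y1), (R x1 y2); split;
    rewrite ?(as_diag hs).
move=> [[i1 [i2 [j1 [j2 [n1 n2 n3 n4 ->]]]]] c1]; split=> //.
have D0 : ord0 \notin ~: [set (@ord0 d)] by rewrite !inE eqxx.
apply: (P1 _ D0) => //; rewrite ?inE //.
by exists i; split=> // a b; rewrite !inE; apply: hp.
Qed.
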